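(* Let $\mathscr{C}_n$ be the set of Catalan words of length $2n$. For every integer $m\ge 2$ and every $0\le r\le m-1$, $$\lim_{n\to\infty}\frac{\left|\{w\in\mathscr{C}_n:\ \mathrm{maj}(w)\equiv r\pmod m\}\right|}{|\mathscr{C}_n|}=\frac1m ,$$ where $|\mathscr{C}_n|=\frac{1}{n+1}\binom{2n}{n}$. That is, the major index over Catalan words of length $2n$ has the balanced property.
   Context: A Catalan word of length $2n$ is a sequence $w=w_1w_2\cdots w_{2n}$ consisting of $n$ zeros and $n$ ones such that no prefix contains more $1$'s than $0$'s. Its major index is $\mathrm{maj}(w)=\sum_{i:\,w_i>w_{i+1}} i$. A statistic $\xi$ on sets $Q_n$ has the balanced property if for every $m\ge 2$ and every $0\le r\le m-1$, $\lim_{n\to\infty}|\{\pi\in Q_n:\xi(\pi)\equiv r \pmod m\}|/|Q_n| = 1/m$. *)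

(* Defs.v *)
From Stdlib Require Import Reals Arith List Bool.
Import ListNotations.

(* A binary word is a list of booleans: false = letter 0, true = letter 1. *)

Fixpoint words (k : nat) : list (list bool) :=
  match k with
  | 0 => [ [] ]
  | S k' => flat_map (fun w => [false :: w; true :: w]) (words k')
  end.

Definition nzeros (w : list bool) : nat := count_occ Bool.bool_dec w false.
Definition nones  (w : list bool) : nat := count_occ Bool.bool_dec w true.

Definition is_catalan (n : nat) (w : list bool) : bool :=
  Nat.eqb (length w) (2 * n)
  && Nat.eqb (nzeros w) n
  && Nat.eqb (nones w) n
  && forallb (fun j => Nat.leb (nones (firstn j w)) (nzeros (firstn j w)))
             (seq 0 (S (length w))).

(* Letter w_i (1-indexed) as a number 0/1. *)
Definition letter (w : list bool) (i : nat) : nat :=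
  if nth (i - 1) w false then 1 else 0.

Definition maj (w : list bool) : nat :=
  fold_right Nat.add 0
    (map (fun i => if Nat.ltb (letter w (S i)) (letter w i) then i else 0)
         (seq 1 (length w - 1))).

Definition catalan_words (n : nat) : list (list bool) :=
  filter (is_catalan n) (words (2 * n)).

Definition maj_class_count (m r n : nat) : nat :=
  length (filter (fun w => Nat.eqb (maj w mod m) r) (catalan_words n)).

(* Main.v *)
Require Import Defs.
From Stdlib Require Import Reals Arith List Lia ZArith Lra Psatz.
Import ListNotations.

Lemma in_words : forall k w, In w (words k) <-> length w = k.
Proof.
  induction k; intros w; simpl.
  - split. intros [<-|[]]; reflexivity. destruct w; simpl; intro H; [auto|discriminate].
  - rewrite in_flat_map. split.
    + intros [u [Hu Hw]]. apply IHk in Hu. simpl in Hw.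
      destruct Hw as [<-|[<-|[]]]; simpl; lia.
    + destruct w as [|x u]; simpl; intro H; [discriminate|].
      exists u. split. apply IHk; lia. destruct x; simpl; auto.
Qed.

Lemma nodup_words : forall k, NoDup (words k).
Proof.
  induction k; simpl. constructor. simpl; auto. constructor.
  induction IHk as [|u l Hu Hl IH]; simpl. constructor.
  change ((false :: u) :: (true :: u) :: flat_map (fun w => [false :: w; true :: w]) l)
    with ([false :: u; true :: u] ++ flat_map (fun w => [false :: w; true :: w]) l).
  apply NoDup_app; auto.
  - constructor. intros [H|[]]; discriminate. constructor; auto. constructor.
  - intros a Ha Hin. rewrite in_flat_map in Hin. destruct Hin as [v [Hv Hav]].
    simpl in Ha, Hav.
    destruct Ha as [<-|[<-|[]]]; destruct Hav as [H|[H|[]]]; inversion H; subst; contradiction.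
Qed.

Definition cnt (k : nat) (P : list bool -> bool) : nat := length (filter P (words k)).

Lemma filter_flat_map2 (P : list bool -> bool) (l : list (list bool)) :
  length (filter P (flat_map (fun w => [false :: w; true :: w]) l)) =
  length (filter (fun w => P (false :: w)) l) + length (filter (fun w => P (true :: w)) l).
Proof.
  induction l; simpl; auto.
  destruct (P (false :: a)), (P (true :: a)); simpl; rewrite IHl; lia.
Qed.

Lemma cnt_S k P : cnt (S k) P = cnt k (fun w => P (false :: w)) + cnt k (fun w => P (true :: w)).
Proof. unfold cnt; simpl; apply filter_flat_map2. Qed.

Lemma filter_len_ext_in {A} (P Q : A -> bool) l :
  (forall x, In x l -> P x = Q x) -> length (filter P l) = length (filter Q l).
Proof. intro H. f_equal. apply filter_ext_in. auto. Qed.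

Lemma filter_len_le_in {A} (P Q : A -> bool) l :
  (forall x, In x l -> P x = true -> Q x = true) -> length (filter P l) <= length (filter Q l).
Proof.
  induction l; simpl; intros H; auto.
  specialize (H a (or_introl eq_refl)) as Ha.
  assert (IH := IHl (fun x Hx => H x (or_intror Hx))).
  destruct (P a) eqn:E1, (Q a); simpl; try lia; specialize (Ha eq_refl); discriminate.
Qed.

Lemma cnt_ext k P Q : (forall w, length w = k -> P w = Q w) -> cnt k P = cnt k Q.
Proof. intros H. apply filter_len_ext_in. intros x Hx. apply H, in_words; auto. Qed.

Lemma cnt_le k P Q : (forall w, length w = k -> P w = true -> Q w = true) -> cnt k P <= cnt k Q.
Proof. intros H. apply filter_len_le_in. intros x Hx. apply H, in_words; auto. Qed.

Lemma cnt_true k : cnt k (fun _ => true) = 2 ^ k.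
Proof.
  induction k. reflexivity. rewrite cnt_S. simpl. rewrite IHk. lia.
Qed.

Lemma filter_len_compl {A} (P : A -> bool) l :
  length (filter P l) + length (filter (fun x => negb (P x)) l) = length l.
Proof. induction l; simpl; auto. destruct (P a); simpl; lia. Qed.

Lemma cnt_compl k P : cnt k P + cnt k (fun w => negb (P w)) = 2 ^ k.
Proof.
  unfold cnt. rewrite filter_len_compl. rewrite <- (cnt_true k). unfold cnt.
  induction (words k); simpl; auto.
Qed.

Lemma cnt_block a b (A B : list bool -> bool) :
  cnt (a + b) (fun w => andb (A (firstn a w)) (B (skipn a w))) = cnt a A * cnt b B.
Proof.
  revert A. induction a; intros A.
  - simpl. unfold cnt at 2. simpl.
    destruct (A []); simpl.
    + rewrite Nat.add_0_r. reflexivity.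
    + rewrite <- (Nat.mul_0_l (cnt b B)). unfold cnt. 
      induction (words b); simpl; auto.
  - simpl. rewrite cnt_S, cnt_S. simpl.
    rewrite (IHa (fun u => A (false :: u))), (IHa (fun u => A (true :: u))). lia.
Qed.


Lemma NoDup_map_in {A B} (f : A -> B) l :
  NoDup l -> (forall x y, In x l -> In y l -> f x = f y -> x = y) -> NoDup (map f l).
Proof.
  induction 1 as [|a l Ha Hl IH]; intros Hinj; simpl; constructor.
  - intro Hin. apply in_map_iff in Hin. destruct Hin as [y [Hy Hyl]].
    assert (y = a) by (apply Hinj; simpl; auto). subst; contradiction.
  - apply IH. intros; apply Hinj; simpl; auto.
Qed.

Lemma inj_count {A} (f : A -> A) (P Q : A -> bool) l l' :
  NoDup l ->
  (forall x, In x l -> P x = true -> In (f x) l' /\ Q (f x) = true) ->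
  (forall x y, In x l -> In y l -> P x = true -> P y = true -> f x = f y -> x = y) ->
  length (filter P l) <= length (filter Q l').
Proof.
  intros Hnd Hmap Hinj.
  rewrite <- (length_map f).
  apply NoDup_incl_length.
  - apply NoDup_map_in. apply NoDup_filter; auto.
    intros x y Hx Hy. apply filter_In in Hx, Hy. apply Hinj; tauto.
  - intros z Hz. apply in_map_iff in Hz. destruct Hz as [x [<- Hx]].
    apply filter_In in Hx. apply filter_In. apply Hmap; tauto.
Qed.

Fixpoint sumf (f : nat -> nat) (n : nat) : nat :=
  match n with 0 => 0 | S n' => sumf f n' + f n' end.

Lemma sumf_add f g n : sumf (fun j => f j + g j) n = sumf f n + sumf g n.
Proof. induction n; simpl; lia. Qed.

Lemma sumf_ext f g n : (forall j, j < n -> f j = g j) -> sumf f n = sumf g n.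
Proof. induction n; simpl; intros H; auto. rewrite IHn, H; auto. Qed.

Lemma sumf_const c n : sumf (fun _ => c) n = n * c.
Proof. induction n; simpl; lia. Qed.

Lemma sumf_pos f n j : j < n -> 1 <= f j -> 1 <= sumf f n.
Proof. induction n; simpl; intros Hj Hf. lia. destruct (Nat.eq_dec j n). subst; lia.
  assert (1 <= sumf f n) by (apply IHn; [lia|auto]). lia. Qed.

Lemma cnt_cover N P Q (g h : nat -> list bool -> list bool) :
  (forall j w, length w = N -> length (g j w) = N) ->
  (forall j w, length w = N -> length (h j w) = N) ->
  (forall j w, j <= N -> length w = N -> g j (h j w) = w) ->
  (forall j w, j <= N -> length w = N -> h j (g j w) = w) ->
  (forall w, length w = N -> P w = true -> exists j, j <= N /\ Q (g j w) = true) ->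
  cnt N P <= S N * cnt N Q.
Proof.
  intros Hg Hh Hgh Hhg Hex.
  assert (Hstep : forall j, j <= N -> cnt N (fun w => Q (g j w)) = cnt N Q).
  { intros j Hj. unfold cnt. apply Nat.le_antisymm.
    - apply (inj_count (g j)). apply nodup_words.
      + intros x Hx Hq. apply in_words in Hx. split; auto. apply in_words; auto.
      + intros x y Hx Hy _ _ E. apply in_words in Hx, Hy.
        rewrite <- (Hhg j x), <- (Hhg j y), E; auto.
    - apply (inj_count (h j)). apply nodup_words.
      + intros x Hx Hq. apply in_words in Hx. split. apply in_words; auto.
        rewrite Hgh; auto.
      + intros x y Hx Hy _ _ E. apply in_words in Hx, Hy.
        rewrite <- (Hgh j x), <- (Hgh j y), E; auto. }
  assert (H1 : cnt N P <= sumf (fun j => cnt N (fun w => Q (g j w))) (S N)).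
  { unfold cnt. assert (Hl : forall w, In w (words N) -> length w = N) by (intros; apply in_words; auto).
    induction (words N) as [|a l IH]. simpl; lia.
    rewrite (sumf_ext _ (fun j => (if Q (g j a) then 1 else 0) + length (filter (fun w => Q (g j w)) l))).
    2:{ intros j _. simpl. destruct (Q (g j a)); simpl; lia. }
    rewrite sumf_add.
    assert (IH' := IH (fun w Hw => Hl w (or_intror Hw))).
    cbn [filter]. destruct (P a) eqn:Ea; cbn [length]; try lia.
    destruct (Hex a (Hl a (or_introl eq_refl)) Ea) as [j [Hj Hq]].
    assert (1 <= sumf (fun j => if Q (g j a) then 1 else 0) (S N)).
    { apply (sumf_pos _ _ j). lia. rewrite Hq; auto. }
    lia. }
  rewrite (sumf_ext _ (fun _ => cnt N Q)) in H1. rewrite sumf_const in H1. lia.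
  intros j Hj. apply Hstep. lia.
Qed.

Definition ht (l : list bool) : Z := (Z.of_nat (nzeros l) - Z.of_nat (nones l))%Z.

Lemma nzeros_app a b : nzeros (a ++ b) = nzeros a + nzeros b.
Proof. unfold nzeros. apply count_occ_app. Qed.
Lemma nones_app a b : nones (a ++ b) = nones a + nones b.
Proof. unfold nones. apply count_occ_app. Qed.
Lemma ht_app a b : ht (a ++ b) = (ht a + ht b)%Z.
Proof. unfold ht. rewrite nzeros_app, nones_app. lia. Qed.
Lemma zeros_ones_len l : nzeros l + nones l = length l.
Proof. induction l as [|[] l IH]; unfold nzeros, nones in *; simpl in *; lia. Qed.
Lemma nzeros_cons x l : nzeros (x :: l) = (if x then 0 else 1) + nzeros l.
Proof. destruct x; reflexivity. Qed.
Lemma nones_cons x l : nones (x :: l) = (if x then 1 else 0) + nones l.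
Proof. destruct x; reflexivity. Qed.

Lemma is_catalan_iff n w :
  is_catalan n w = true <->
  (length w = 2 * n /\ nzeros w = n /\ nones w = n /\ forall j, (ht (firstn j w) >= 0)%Z).
Proof.
  unfold is_catalan. rewrite !Bool.andb_true_iff, !Nat.eqb_eq, forallb_forall.
  split.
  - intros [[[H1 H2] H3] H4]. repeat split; auto. intro j.
    destruct (Nat.le_gt_cases j (length w)).
    + specialize (H4 j). rewrite in_seq in H4. apply Nat.leb_le in H4; [|lia]. unfold ht; lia.
    + specialize (H4 (length w)). rewrite in_seq in H4. apply Nat.leb_le in H4; [|lia].
      rewrite firstn_all2 by lia. rewrite firstn_all in H4. unfold ht; lia.
  - intros [H1 [H2 [H3 H4]]]. repeat split; auto. intros j _. apply Nat.leb_le.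
    specialize (H4 j). unfold ht in H4; lia.
Qed.

Fixpoint flip (j : nat) (w : list bool) : list bool :=
  match j, w with
  | 0, _ => w
  | S j', x :: t => negb x :: flip j' t
  | S _, [] => []
  end.

Lemma flip_len j w : length (flip j w) = length w.
Proof. revert w; induction j; destruct w; simpl; auto. Qed.
Lemma flip_inv j w : flip j (flip j w) = w.
Proof. revert w; induction j; destruct w; simpl; auto. rewrite IHj, Bool.negb_involutive; auto. Qed.
Lemma flip_step j w : nzeros (flip (S j) w) <= nzeros (flip j w) + 1 /\ nzeros (flip j w) <= nzeros (flip (S j) w) + 1.
Proof.
  revert w; induction j; intros [|x t]; try (unfold nzeros; simpl; lia).
  - destruct x; unfold nzeros; simpl; lia.
  - change (flip (S (S j)) (x :: t)) with (negb x :: flip (S j) t).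
    change (flip (S j) (x :: t)) with (negb x :: flip j t).
    rewrite !nzeros_cons. specialize (IHj t). lia.
Qed.
Lemma flip_all w : nzeros (flip (length w) w) = nones w.
Proof. induction w as [|x t IH]; simpl; auto. rewrite nzeros_cons, nones_cons, IH. destruct x; simpl; lia. Qed.

Lemma ivt_up (f : nat -> nat) t N :
  (forall j, f (S j) <= f j + 1) -> f 0 <= t -> t <= f N -> exists j, j <= N /\ f j = t.
Proof.
  intros Hs H0. induction N; intros HN. exists 0; split; auto; lia.
  destruct (Nat.le_gt_cases t (f N)).
  - destruct (IHN H) as [j [Hj Hf]]. exists j; split; auto.
  - exists (S N). specialize (Hs N). split; auto; lia.
Qed.
Lemma ivt_down (f : nat -> nat) t N :
  (forall j, f j <= f (S j) + 1) -> t <= f 0 -> f N <= t -> exists j, j <= N /\ f j = t.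
Proof.
  intros Hs H0. induction N; intros HN. exists 0; split; auto; lia.
  destruct (Nat.le_gt_cases (f N) t).
  - destruct (IHN H) as [j [Hj Hf]]. exists j; split; auto.
  - exists (S N). specialize (Hs N). split; auto; lia.
Qed.

Lemma four_pow_le n : 4 ^ n <= S (2 * n) * cnt (2 * n) (fun w => Nat.eqb (nzeros w) n).
Proof.
  replace (4 ^ n) with (2 ^ (2 * n)).
  2:{ rewrite Nat.pow_mul_r. reflexivity. }
  rewrite <- cnt_true.
  apply (cnt_cover _ _ _ flip flip).
  - intros; rewrite flip_len; auto.
  - intros; rewrite flip_len; auto.
  - intros; apply flip_inv.
  - intros; apply flip_inv.
  - intros w Hw _.
    assert (Hz := zeros_ones_len w).
    assert (Hall := flip_all w). rewrite Hw in Hall.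
    destruct (Nat.le_gt_cases (nzeros w) n).
    + destruct (ivt_up (fun j => nzeros (flip j w)) n (2 * n)) as [j [Hj Hf]].
      intro j; apply flip_step. simpl; lia. lia.
      exists j; split; auto. apply Nat.eqb_eq; auto.
    + destruct (ivt_down (fun j => nzeros (flip j w)) n (2 * n)) as [j [Hj Hf]].
      intro j; apply flip_step. simpl; lia. lia.
      exists j; split; auto. apply Nat.eqb_eq; auto.
Qed.

Definition rot (p : nat) (w : list bool) : list bool := skipn p w ++ firstn p w.

Lemma rot_len p w : length (rot p w) = length w.
Proof. unfold rot. rewrite length_app, length_skipn, length_firstn. lia. Qed.

Lemma rot_inv p w : p <= length w -> rot (length w - p) (rot p w) = w.
Proof.
  intros Hp. unfold rot at 1.
  assert (HA : length (skipn p w) = length w - p) by (rewrite length_skipn; lia).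
  unfold rot. rewrite skipn_app, firstn_app, HA, Nat.sub_diag.
  rewrite (skipn_all2 (n:=length w - p) (skipn p w)) by lia. rewrite (firstn_all2 (n:=length w - p) (skipn p w)) by lia. simpl.
  rewrite app_nil_r. apply firstn_skipn.
Qed.

Lemma firstn_add p j (w : list bool) : firstn (p + j) w = firstn p w ++ firstn j (skipn p w).
Proof. revert w; induction p; intros [|x t]; simpl; auto. rewrite firstn_nil; auto. rewrite IHp; auto. Qed.

Lemma argmin (h : nat -> Z) N : exists p, p <= N /\ forall q, q <= N -> (h p <= h q)%Z.
Proof.
  induction N. exists 0. split; auto. intros q Hq. replace q with 0 by lia. lia.
  destruct IHN as [p [Hp Hm]].
  destruct (Z.le_gt_cases (h p) (h (S N))).
  - exists p. split. lia. intros q Hq. destruct (Nat.eq_dec q (S N)). subst; auto. apply Hm; lia.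
  - exists (S N). split. lia. intros q Hq. destruct (Nat.eq_dec q (S N)). subst; lia.
    specialize (Hm q ltac:(lia)). lia.
Qed.

Lemma ht_firstn_all j (w : list bool) : length w <= j -> firstn j w = w.
Proof. apply firstn_all2. Qed.

Lemma rot_catalan n w : length w = 2 * n -> nzeros w = n -> exists p, p <= 2 * n /\ is_catalan n (rot p w) = true.
Proof.
  intros Hl Hz.
  assert (Ho : nones w = n) by (pose proof (zeros_ones_len w); lia).
  destruct (argmin (fun q => ht (firstn q w)) (2 * n)) as [p [Hp Hm]].
  exists p. split; auto. apply is_catalan_iff.
  assert (Hw : w = firstn p w ++ skipn p w) by (symmetry; apply firstn_skipn).
  unfold rot. repeat split.
  - rewrite length_app, length_skipn, length_firstn. lia.
  - rewrite nzeros_app. rewrite Hw in Hz at 1. rewrite nzeros_app in Hz. lia.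
  - rewrite nones_app. rewrite Hw in Ho at 1. rewrite nones_app in Ho. lia.
  - intro j. assert (HA : length (skipn p w) = 2 * n - p) by (rewrite length_skipn; lia).
    rewrite firstn_app, ht_app, HA.
    assert (Hhtw : ht w = 0%Z) by (unfold ht; lia).
    destruct (Nat.le_gt_cases j (2 * n - p)).
    + replace (j - (2 * n - p)) with 0 by lia. simpl.
      assert (E := firstn_add p j w). 
      specialize (Hm (p + j) ltac:(lia)). rewrite E, ht_app in Hm. assert (ht [] = 0%Z) by reflexivity. lia.
    + rewrite firstn_all2 by lia. rewrite firstn_firstn.
      specialize (Hm (Nat.min (j - (2 * n - p)) p) ltac:(lia)).
      rewrite Hw, ht_app in Hhtw. lia.
Qed.

Lemma binom_le_cat n : cnt (2 * n) (fun w => Nat.eqb (nzeros w) n) <= S (2 * n) * cnt (2 * n) (is_catalan n).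
Proof.
  apply (cnt_cover _ _ _ rot (fun p => rot (2 * n - p))).
  - intros; rewrite rot_len; auto.
  - intros; rewrite rot_len; auto.
  - intros j w Hj Hw. assert (E := rot_inv (2*n - j) w ltac:(lia)). rewrite Hw in E.
    replace (2*n - (2*n - j)) with j in E by lia. exact E.
  - intros j w Hj Hw. assert (E := rot_inv j w ltac:(lia)). rewrite Hw in E. exact E.
  - intros w Hw Hz. apply Nat.eqb_eq in Hz. apply rot_catalan; auto.
Qed.


Fixpoint Dm (i : nat) (b : bool) (w : list bool) : nat :=
  match w with [] => 0 | y :: t => (if andb b (negb y) then i - 1 else 0) + Dm (S i) y t end.

Lemma maj_gen : forall t x c,
  fold_right Nat.add 0 (map (fun i => if Nat.ltb (letter (x::t) (S i)) (letter (x::t) i) then i + c else 0)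
     (seq 1 (length t))) = Dm (c + 2) x t.
Proof.
  induction t as [|y t IH]; intros x c. reflexivity.
  change (length (y :: t)) with (S (length t)). rewrite <- cons_seq.
  rewrite <- seq_shift. cbn [map fold_right]. rewrite map_map.
  rewrite (map_ext_in _ (fun i => if Nat.ltb (letter (y::t) (S i)) (letter (y::t) i) then i + S c else 0)).
  2:{ intros i Hi. apply in_seq in Hi. destruct i as [|i]; [lia|].
      unfold letter. replace (S (S (S i)) - 1) with (S (S i)) by lia.
      replace (S (S i) - 1) with (S i) by lia. replace (S (S i) - 1) with (S i) by lia.
      replace (S i - 1) with i by lia. cbn [nth]. replace (S (S i) + c) with (S i + S c) by lia. reflexivity. }
  rewrite IH. cbn [Dm]. replace (S c + 2) with (S (c + 2)) by lia.
  unfold letter; cbn [nth Nat.sub]. destruct x, y; simpl; lia.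
Qed.

Lemma maj_Dm w : maj w = Dm 1 false w.
Proof.
  destruct w as [|x t]. reflexivity.
  unfold maj. cbn [length]. replace (S (length t) - 1) with (length t) by lia.
  rewrite (map_ext (fun i => if Nat.ltb (letter (x::t) (S i)) (letter (x::t) i) then i else 0)
     (fun i => if Nat.ltb (letter (x::t) (S i)) (letter (x::t) i) then i + 0 else 0)).
  2:{ intro i. rewrite Nat.add_0_r. reflexivity. }
  rewrite maj_gen. reflexivity.
Qed.

Lemma last_cons (x c : bool) a : last (x :: a) c = last a x.
Proof. revert x c; induction a as [|y a IH]; intros x c. reflexivity. change (last (x :: y :: a) c) with (last (y :: a) c). rewrite !IH. reflexivity. Qed.

Lemma Dm_app a : forall b i c, Dm i c (a ++ b) = Dm i c a + Dm (i + length a) (last a c) b.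
Proof.
  induction a as [|x a IH]; intros b i c; simpl. rewrite Nat.add_0_r; auto.
  rewrite IH. replace (S i + length a) with (i + S (length a)) by lia.
  rewrite <- (last_cons x c a). simpl. lia.
Qed.

Definition gblk (m j : nat) : list bool :=
  false :: repeat false j ++ true :: repeat false (m - 1 - j) ++ [false].

Fixpoint lead0 (u : list bool) : nat :=
  match u with false :: t => S (lead0 t) | _ => 0 end.

Definition goodb (m : nat) (u : list bool) : bool :=
  andb (andb (Nat.leb 1 (lead0 u)) (Nat.leb (lead0 u) m))
       (if list_eq_dec Bool.bool_dec u (gblk m (pred (lead0 u))) then true else false).

Definition rotb (m : nat) (u : list bool) : list bool := gblk m (S (pred (lead0 u)) mod m).

Lemma lead0_rep j t : lead0 (repeat false j ++ true :: t) = j.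
Proof. induction j; simpl; auto. Qed.

Lemma lead0_gblk m j : lead0 (gblk m j) = S j.
Proof. unfold gblk. cbn [lead0]. rewrite lead0_rep. reflexivity. Qed.

Lemma gblk_len m j : j < m -> length (gblk m j) = m + 2.
Proof. intros. unfold gblk. simpl. rewrite length_app, repeat_length. simpl.
  rewrite length_app, repeat_length. simpl. lia. Qed.

Lemma goodb_iff m u : goodb m u = true <-> exists j, j < m /\ u = gblk m j.
Proof.
  unfold goodb. split.
  - intro H. apply andb_prop in H. destruct H as [H1 H2]. apply andb_prop in H1.
    destruct H1 as [H1 H3]. apply Nat.leb_le in H1, H3.
    destruct (list_eq_dec Bool.bool_dec u (gblk m (pred (lead0 u)))); [|discriminate].
    exists (pred (lead0 u)). split; auto. lia.
  - intros [j [Hj ->]]. rewrite lead0_gblk. cbn [pred].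
    destruct (list_eq_dec Bool.bool_dec (gblk m j) (gblk m j)); [|contradiction].
    replace (1 <=? S j) with true by (symmetry; apply Nat.leb_le; lia).
    replace (S j <=? m) with true by (symmetry; apply Nat.leb_le; lia). reflexivity.
Qed.

Lemma gblk_inj m j j' : gblk m j = gblk m j' -> j = j'.
Proof. intro E. assert (E' := f_equal lead0 E). rewrite !lead0_gblk in E'. lia. Qed.

Lemma rotb_gblk m j : rotb m (gblk m j) = gblk m (S j mod m).
Proof. unfold rotb. rewrite lead0_gblk. reflexivity. Qed.

Lemma mod_S_lt m j : 0 < m -> S j mod m < m.
Proof. intros; apply Nat.mod_upper_bound; lia. Qed.

Lemma Dm_allfalse i k : Dm i false (repeat false k) = 0.
Proof. revert i; induction k; intros i; simpl; auto. Qed.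

Lemma last_rep_false k c : last (repeat false k) c = match k with 0 => c | _ => false end.
Proof. induction k; simpl; auto. destruct k; auto. Qed.

Lemma Dm_gblk m i c j : 1 <= i -> Dm i c (gblk m j) = (if c then i - 1 else 0) + S i + j.
Proof.
  intros Hi. unfold gblk. cbn [Dm]. rewrite Dm_app, Dm_allfalse, repeat_length.
  rewrite last_rep_false. replace (match j with 0 => false | _ => false end) with false by (destruct j; auto).
  cbn [Dm]. destruct (m - 1 - j) as [|k]; cbn [repeat app Dm].
  - destruct c; simpl; lia.
  - rewrite Dm_app, Dm_allfalse, last_rep_false. replace (match k with 0 => false | _ => false end) with false by (destruct k; auto). destruct c; simpl; lia.
Qed.

Lemma last_gblk m j c : last (gblk m j) c = false.
Proof.
  replace (gblk m j) with ((false :: repeat false j ++ true :: repeat false (m-1-j)) ++ [false]).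
  apply last_last. unfold gblk. simpl. rewrite <- app_assoc. reflexivity.
Qed.

Definition majY (m : nat) (p s : list bool) : nat :=
  Dm 1 false p + (if last p false then length p else 0) + S (1 + length p) + Dm (1 + length p + (m + 2)) false s.

Lemma maj_block m p s j : j < m -> maj (p ++ gblk m j ++ s) = majY m p s + j.
Proof.
  intros Hj. rewrite maj_Dm, Dm_app, Dm_app, Dm_gblk by lia. rewrite last_gblk, gblk_len by auto.
  unfold majY. destruct (last p false); lia.
Qed.

Lemma nzeros_rep k : nzeros (repeat false k) = k.
Proof. induction k; [reflexivity| cbn [repeat]; rewrite nzeros_cons, IHk; reflexivity]. Qed.
Lemma nones_rep k : nones (repeat false k) = 0.
Proof. induction k; [reflexivity| cbn [repeat]; rewrite nones_cons, IHk; reflexivity]. Qed.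

Lemma nzeros_gblk m j : j < m -> nzeros (gblk m j) = m + 1.
Proof. intros. unfold gblk. rewrite nzeros_cons, nzeros_app, nzeros_cons, nzeros_app, !nzeros_rep. assert (nzeros [false] = 1) by reflexivity. simpl. lia. Qed.
Lemma nones_gblk m j : nones (gblk m j) = 1.
Proof. unfold gblk. rewrite nones_cons, nones_app, nones_cons, nones_app, !nones_rep. assert (nones [false] = 0) by reflexivity. simpl. lia. Qed.

Lemma ht_ge_nones l : (ht l >= - Z.of_nat (nones l))%Z.
Proof. unfold ht. lia. Qed.

Lemma nones_firstn k l : nones (firstn k l) <= nones l.
Proof. rewrite <- (firstn_skipn k l) at 2. rewrite nones_app. lia. Qed.

Lemma ht_firstn_gblk m j k : (ht (firstn k (gblk m j)) >= 0)%Z.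
Proof.
  destruct k. unfold ht; simpl; lia.
  unfold gblk. cbn [firstn]. change (false :: ?x) with ([false] ++ x). rewrite ht_app.
  assert (H1 := ht_ge_nones (firstn k (repeat false j ++ true :: repeat false (m - 1 - j) ++ [false]))).
  assert (H2 := nones_firstn k (repeat false j ++ true :: repeat false (m - 1 - j) ++ [false])).
  rewrite nones_app, nones_cons, nones_app, !nones_rep in H2. simpl in H2.
  assert (ht [false] = 1%Z) by reflexivity. assert (nones [false] = 0) by reflexivity. lia.
Qed.

Lemma ht_firstn3 i p g s : ht (firstn i (p ++ g ++ s)) =
  (ht (firstn i p) + ht (firstn (i - length p) g) + ht (firstn (i - length p - length g) s))%Z.
Proof. rewrite firstn_app, firstn_app, !ht_app. lia. Qed.

Lemma cat_replace n m p s j j' : j < m -> j' < m ->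
  is_catalan n (p ++ gblk m j ++ s) = true -> is_catalan n (p ++ gblk m j' ++ s) = true.
Proof.
  intros Hj Hj'. rewrite !is_catalan_iff.
  rewrite !length_app, !nzeros_app, !nones_app, !gblk_len, !nzeros_gblk, !nones_gblk by auto.
  intros [H1 [H2 [H3 H4]]]. repeat split; auto.
  intro i. assert (Hp := H4 (length p)). rewrite ht_firstn3, Nat.sub_diag in Hp. simpl in Hp.
  rewrite firstn_all in Hp. assert (E0 : ht [] = 0%Z) by reflexivity.
  specialize (H4 i). rewrite ht_firstn3, gblk_len in H4 |- * by auto.
  destruct (Nat.le_gt_cases (m + 2) (i - length p)).
  - rewrite (firstn_all2 (n:=i - length p) (gblk m j)) in H4 by (rewrite gblk_len; auto; lia).
    rewrite (firstn_all2 (n:=i - length p) (gblk m j')) by (rewrite gblk_len; auto; lia).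
    assert (ht (gblk m j) = ht (gblk m j')) by (unfold ht; rewrite !nzeros_gblk, !nones_gblk; auto). lia.
  - replace (i - length p - (m + 2)) with 0 by lia. simpl.
    assert (Hf := ht_firstn_gblk m j' (i - length p)).
    destruct (Nat.le_gt_cases i (length p)).
    + replace (i - length p) with 0 in * by lia. simpl in *. lia.
    + rewrite firstn_all2 by lia. lia.
Qed.

Fixpoint nogood (m k : nat) (w : list bool) : bool :=
  match k with 0 => true | S k' => andb (negb (goodb m (firstn (m + 2) w))) (nogood m k' (skipn (m + 2) w)) end.

Fixpoint shift (m k : nat) (w : list bool) : list bool :=
  match k with
  | 0 => w
  | S k' => if goodb m (firstn (m + 2) w) then rotb m (firstn (m + 2) w) ++ skipn (m + 2) w
            else firstn (m + 2) w ++ shift m k' (skipn (m + 2) w)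
  end.

Lemma goodb_nil m : goodb m [] = false.
Proof. reflexivity. Qed.

Lemma nogood_nil m k : nogood m k [] = true.
Proof. induction k; simpl; auto. rewrite firstn_nil, skipn_nil, IHk. reflexivity. Qed.

Lemma shift_decomp m k w : 0 < m -> nogood m k w = false ->
  exists p s j, j < m /\ w = p ++ gblk m j ++ s /\ shift m k w = p ++ gblk m (S j mod m) ++ s.
Proof.
  intros Hm. revert w; induction k; intros w Hn; [discriminate|].
  cbn [nogood shift] in Hn |- *. destruct (goodb m (firstn (m + 2) w)) eqn:Eg.
  - apply goodb_iff in Eg. destruct Eg as [j [Hj Eu]].
    exists [], (skipn (m + 2) w), j. split; auto. split.
    + cbn [app]. rewrite <- (firstn_skipn (m + 2) w) at 1. rewrite Eu. reflexivity.
    + rewrite Eu, rotb_gblk. reflexivity.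
  - simpl in Hn. destruct (IHk _ Hn) as [p [s [j [Hj [E1 E2]]]]].
    exists (firstn (m + 2) w ++ p), s, j. split; auto. split.
    + rewrite <- app_assoc, <- E1. symmetry; apply firstn_skipn.
    + rewrite E2, app_assoc. reflexivity.
Qed.

Lemma app_split {A} (a a' b b' : list A) : length a = length a' -> a ++ b = a' ++ b' -> a = a' /\ b = b'.
Proof.
  intros Hl E. split.
  - assert (E1 := f_equal (firstn (length a)) E). rewrite firstn_app, Nat.sub_diag, firstn_all in E1.
    rewrite Hl, firstn_app, Nat.sub_diag, firstn_all in E1. simpl in E1. rewrite !app_nil_r in E1. auto.
  - assert (E1 := f_equal (skipn (length a)) E). rewrite skipn_app, Nat.sub_diag, skipn_all in E1.
    rewrite Hl, skipn_app, Nat.sub_diag, skipn_all in E1. simpl in E1. auto.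
Qed.

Lemma app_len_fs {A} n (a b : list A) : length a = n -> firstn n (a ++ b) = a /\ skipn n (a ++ b) = b.
Proof. intros <-. rewrite firstn_app, skipn_app, Nat.sub_diag, firstn_all, skipn_all. simpl. rewrite app_nil_r. auto. Qed.

Lemma bad_len m k w : goodb m (firstn (m + 2) w) = false -> nogood m (S k) w = false ->
  length (firstn (m + 2) w) = m + 2.
Proof.
  intros Hg Hn. simpl in Hn. rewrite Hg in Hn. simpl in Hn.
  rewrite length_firstn. destruct (Nat.le_gt_cases (m + 2) (length w)). lia.
  rewrite skipn_all2 in Hn by lia. rewrite nogood_nil in Hn. discriminate.
Qed.

Lemma mod_S_inj m j j' : j < m -> j' < m -> S j mod m = S j' mod m -> j = j'.
Proof.
  intros Hj Hj' E.
  assert (F : forall x, x < m -> S x mod m = if Nat.eqb (S x) m then 0 else S x).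
  { intros x Hx. destruct (Nat.eqb_spec (S x) m). rewrite e. apply Nat.mod_same. lia.
    apply Nat.mod_small. lia. }
  rewrite !F in E by auto. destruct (Nat.eqb_spec (S j) m), (Nat.eqb_spec (S j') m); lia.
Qed.

Lemma shift_first m k w : 0 < m -> nogood m (S k) w = false ->
  firstn (m + 2) (shift m (S k) w) = (if goodb m (firstn (m + 2) w) then rotb m (firstn (m + 2) w) else firstn (m + 2) w)
  /\ skipn (m + 2) (shift m (S k) w) = (if goodb m (firstn (m + 2) w) then skipn (m + 2) w else shift m k (skipn (m + 2) w)).
Proof.
  intros Hm Hn. cbn [shift]. destruct (goodb m (firstn (m + 2) w)) eqn:Eg.
  - apply goodb_iff in Eg. destruct Eg as [j [Hj Eu]]. rewrite Eu, rotb_gblk.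
    assert (Hl : length (gblk m (S j mod m)) = m + 2) by (apply gblk_len, mod_S_lt; auto).
    apply app_len_fs; auto.
  - assert (Hl := bad_len m k w Eg Hn). apply app_len_fs; auto.
Qed.

Lemma shift_nogood m k w : 0 < m -> nogood m k w = false -> nogood m k (shift m k w) = false.
Proof.
  intros Hm. revert w; induction k; intros w Hn; [discriminate|].
  destruct (shift_first m k w Hm Hn) as [F Hs].
  change (nogood m (S k) (shift m (S k) w)) with
    (andb (negb (goodb m (firstn (m + 2) (shift m (S k) w)))) (nogood m k (skipn (m + 2) (shift m (S k) w)))).
  rewrite F, Hs. destruct (goodb m (firstn (m + 2) w)) eqn:Eg.
  - apply goodb_iff in Eg. destruct Eg as [j [Hj Eu]]. rewrite Eu, rotb_gblk.
    replace (goodb m (gblk m (S j mod m))) with true. reflexivity.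
    symmetry. apply goodb_iff. exists (S j mod m). split; auto. apply mod_S_lt; auto.
  - rewrite Eg. simpl. apply IHk. simpl in Hn. rewrite Eg in Hn. exact Hn.
Qed.

Lemma shift_inj m k w w' : 0 < m -> nogood m k w = false -> nogood m k w' = false ->
  shift m k w = shift m k w' -> w = w'.
Proof.
  intros Hm. revert w w'; induction k; intros w w' Hn Hn' E; [discriminate|].
  destruct (shift_first m k w Hm Hn) as [F Hs].
  destruct (shift_first m k w' Hm Hn') as [F' Hs'].
  rewrite E in F, Hs. rewrite F in F'. rewrite Hs in Hs'.
  rewrite <- (firstn_skipn (m + 2) w), <- (firstn_skipn (m + 2) w').
  destruct (goodb m (firstn (m + 2) w)) eqn:Eg, (goodb m (firstn (m + 2) w')) eqn:Eg'.
  - apply goodb_iff in Eg, Eg'. destruct Eg as [j [Hj Eu]], Eg' as [j' [Hj' Eu']].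
    rewrite Eu, Eu', !rotb_gblk in *. apply gblk_inj, mod_S_inj in F'; auto. subst j'.
    rewrite Hs'. reflexivity.
  - apply goodb_iff in Eg. destruct Eg as [j [Hj Eu]]. rewrite Eu, rotb_gblk in F'.
    rewrite <- F' in Eg'. assert (goodb m (gblk m (S j mod m)) = true).
    { apply goodb_iff. exists (S j mod m). split; auto. apply mod_S_lt; auto. }
    congruence.
  - apply goodb_iff in Eg'. destruct Eg' as [j [Hj Eu]]. rewrite Eu, rotb_gblk in F'.
    rewrite F' in Eg. assert (goodb m (gblk m (S j mod m)) = true).
    { apply goodb_iff. exists (S j mod m). split; auto. apply mod_S_lt; auto. }
    congruence.
  - rewrite F'. f_equal. apply IHk; auto.
    + simpl in Hn. rewrite Eg in Hn. exact Hn.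
    + simpl in Hn'. rewrite Eg' in Hn'. exact Hn'.
Qed.


Lemma ind_sum x m : sumf (fun r => if Nat.eqb x r then 1 else 0) m = if Nat.ltb x m then 1 else 0.
Proof.
  induction m; simpl. destruct x; reflexivity.
  rewrite IHm. destruct (Nat.ltb_spec x m), (Nat.eqb_spec x m), (Nat.ltb_spec x (S m)); lia.
Qed.

Lemma sum_filter {A} (f : A -> nat) (P : A -> bool) m l : (forall w, f w < m) ->
  sumf (fun r => length (filter (fun w => andb (Nat.eqb (f w) r) (P w)) l)) m = length (filter P l).
Proof.
  intros Hf. induction l as [|x l IH]. simpl. rewrite sumf_const; lia.
  rewrite (sumf_ext _ (fun r => (if Nat.eqb (f x) r then (if P x then 1 else 0) else 0) +
       length (filter (fun w => andb (Nat.eqb (f w) r) (P w)) l))).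
  2:{ intros j _. simpl. destruct (Nat.eqb (f x) j), (P x); simpl; lia. }
  rewrite sumf_add, IH. simpl.
  destruct (P x); simpl.
  - rewrite ind_sum. specialize (Hf x). destruct (Nat.ltb_spec (f x) m); lia.
  - rewrite (sumf_ext _ (fun _ => 0)) by (intros; destruct (Nat.eqb (f x) j); auto). rewrite sumf_const; lia.
Qed.

Lemma filter_split {A} (P Q : A -> bool) l :
  length (filter P l) = length (filter (fun w => andb (P w) (Q w)) l) + length (filter (fun w => andb (P w) (negb (Q w))) l).
Proof. induction l; simpl; auto. destruct (P a), (Q a); simpl; lia. Qed.

Lemma in_CW n w : In w (catalan_words n) <-> is_catalan n w = true.
Proof.
  unfold catalan_words. rewrite filter_In, in_words. split. tauto.
  intro H. split; auto. apply is_catalan_iff in H. tauto.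
Qed.

Lemma nodup_CW n : NoDup (catalan_words n).
Proof. apply NoDup_filter, nodup_words. Qed.

Definition gcount (m K n r : nat) : nat :=
  length (filter (fun w => andb (Nat.eqb (maj w mod m) r) (negb (nogood m K w))) (catalan_words n)).

Lemma gstep m K n r : 0 < m -> gcount m K n r <= gcount m K n (S r mod m).
Proof.
  intros Hm. unfold gcount. apply (inj_count (shift m K)). apply nodup_CW.
  - intros x Hx HP. apply andb_prop in HP. destruct HP as [H1 H2].
    apply Bool.negb_true_iff in H2. apply Nat.eqb_eq in H1.
    destruct (shift_decomp m K x Hm H2) as [p [s [j [Hj [E1 E2]]]]].
    split.
    + apply in_CW. rewrite E2. apply in_CW in Hx. rewrite E1 in Hx.
      apply (cat_replace n m p s j); auto. apply mod_S_lt; auto.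
    + rewrite shift_nogood by auto. rewrite Bool.andb_true_r. apply Nat.eqb_eq.
      rewrite E2, maj_block by (apply mod_S_lt; auto).
      rewrite E1, maj_block in H1 by auto.
      rewrite Nat.add_mod_idemp_r by lia. rewrite <- H1.
      replace (majY m p s + S j) with (1 + (majY m p s + j)) by lia.
      replace (S ((majY m p s + j) mod m)) with (1 + (majY m p s + j) mod m) by lia.
      rewrite Nat.add_mod_idemp_r by lia. reflexivity.
  - intros x y _ _ Hx Hy E. apply andb_prop in Hx, Hy.
    apply (shift_inj m K); auto; apply Bool.negb_true_iff; tauto.
Qed.

Lemma gall m K n r : 0 < m -> r < m -> gcount m K n r = gcount m K n 0.
Proof.
  intros Hm Hr.
  assert (up : forall r, S r < m -> gcount m K n r <= gcount m K n (S r)).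
  { intros r' H. assert (Hg := gstep m K n r' Hm). rewrite Nat.mod_small in Hg by auto. exact Hg. }
  assert (A1 : forall r, r < m -> gcount m K n 0 <= gcount m K n r).
  { induction r0; intros H; auto. specialize (up r0 H). specialize (IHr0 ltac:(lia)). lia. }
  assert (A2 : forall d, d < m -> gcount m K n (m - 1 - d) <= gcount m K n (m - 1)).
  { induction d; intros H. rewrite Nat.sub_0_r; auto.
    specialize (up (m - 1 - S d) ltac:(lia)). replace (S (m - 1 - S d)) with (m - 1 - d) in up by lia.
    specialize (IHd ltac:(lia)). lia. }
  assert (A3 : gcount m K n (m - 1) <= gcount m K n 0).
  { assert (H := gstep m K n (m - 1) Hm). replace (S (m - 1)) with m in H by lia.
    rewrite Nat.mod_same in H by lia. auto. }
  specialize (A1 r Hr). specialize (A2 (m - 1 - r) ltac:(lia)).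
  replace (m - 1 - (m - 1 - r)) with r in A2 by lia. lia.
Qed.

Lemma gsum m K n : 0 < m -> m * gcount m K n 0 = length (filter (fun w => negb (nogood m K w)) (catalan_words n)).
Proof.
  intros Hm. rewrite <- (sum_filter (fun w => maj w mod m) _ m) by (intros; apply Nat.mod_upper_bound; lia).
  rewrite (sumf_ext _ (fun _ => gcount m K n 0)). rewrite sumf_const. lia.
  intros j Hj. rewrite <- (gall m K n j) by auto. reflexivity.
Qed.

Lemma cnt_nogood m k rr : cnt (k * (m + 2) + rr) (nogood m k) = (cnt (m + 2) (fun u => negb (goodb m u))) ^ k * 2 ^ rr.
Proof.
  induction k. simpl. rewrite <- cnt_true. rewrite Nat.add_0_r. apply cnt_ext; auto.
  replace (S k * (m + 2) + rr) with ((m + 2) + (k * (m + 2) + rr)) by lia.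
  change (nogood m (S k)) with (fun w => andb (negb (goodb m (firstn (m + 2) w))) (nogood m k (skipn (m + 2) w))).
  rewrite (cnt_block (m + 2) _ (fun u => negb (goodb m u)) (nogood m k)).
  rewrite IHk. simpl. lia.
Qed.

Lemma cnt_good_pos m : 0 < m -> 1 <= cnt (m + 2) (goodb m).
Proof.
  intros Hm. unfold cnt.
  assert (H : In (gblk m 0) (filter (goodb m) (words (m + 2)))).
  { apply filter_In. split. apply in_words, gblk_len; auto. apply goodb_iff. exists 0; auto. }
  destruct (filter (goodb m) (words (m + 2))); simpl in *; [contradiction|lia].
Qed.

Lemma filter_filter_le {A} (P Q : A -> bool) l : length (filter P (filter Q l)) <= length (filter P l).
Proof. induction l; simpl; auto. destruct (Q a); simpl; destruct (P a); simpl; lia. Qed.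

Lemma bad_bound m n : 0 < m ->
  length (filter (nogood m ((2 * n) / (m + 2))) (catalan_words n)) <=
  (2 ^ (m + 2) - 1) ^ ((2 * n) / (m + 2)) * 2 ^ ((2 * n) mod (m + 2)).
Proof.
  intros Hm. set (K := (2 * n) / (m + 2)). set (rr := (2 * n) mod (m + 2)).
  eapply Nat.le_trans. apply filter_filter_le.
  change (length (filter (nogood m K) (words (2 * n)))) with (cnt (2 * n) (nogood m K)).
  assert (E : 2 * n = K * (m + 2) + rr).
  { unfold K, rr. rewrite (Nat.mul_comm (2 * n / (m + 2))). apply Nat.div_mod. lia. }
  rewrite E, cnt_nogood. apply Nat.mul_le_mono_r. apply Nat.pow_le_mono_l.
  assert (H1 := cnt_compl (m + 2) (goodb m)). assert (H2 := cnt_good_pos m Hm). lia.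
Qed.

Lemma cat_lower n : 4 ^ n <= S (2 * n) * S (2 * n) * length (catalan_words n).
Proof.
  assert (H1 := four_pow_le n). assert (H2 := binom_le_cat n).
  change (length (catalan_words n)) with (cnt (2 * n) (is_catalan n)).
  rewrite <- Nat.mul_assoc. eapply Nat.le_trans. exact H1. apply Nat.mul_le_mono_l. exact H2.
Qed.


Open Scope R_scope.

Lemma cub_nonneg k : 0 <= INR k * (INR k - 1) * (INR k - 2).
Proof.
  destruct k as [|[|k]]. simpl; lra. simpl; lra.
  assert (H : 2 <= INR (S (S k))) by (rewrite S_INR, S_INR; pose proof (pos_INR k); lra).
  apply Rmult_le_pos. apply Rmult_le_pos; lra. lra.
Qed.

Lemma bern3 d k : 0 <= d ->
  1 + INR k * d + INR k * (INR k - 1) / 2 * d ^ 2 + INR k * (INR k - 1) * (INR k - 2) / 6 * d ^ 3 <= (1 + d) ^ k.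
Proof.
  intros Hd. induction k.
  - simpl. lra.
  - rewrite S_INR. simpl pow. simpl pow in IHk.
    assert (H := cub_nonneg k).
    assert (H4 : 0 <= d * d * d * d) by (repeat apply Rmult_le_pos; lra).
    assert (Hm : (1 + d) * (1 + INR k * d + INR k * (INR k - 1) / 2 * (d * (d * 1)) +
        INR k * (INR k - 1) * (INR k - 2) / 6 * (d * (d * (d * 1)))) <= (1 + d) * (1 + d) ^ k).
    { apply Rmult_le_compat_l; lra. }
    assert (0 <= INR k * (INR k - 1) * (INR k - 2) * (d * d * d * d)) by (apply Rmult_le_pos; lra).
    nra.
Qed.

Lemma decay q eps : 0 < q < 1 -> 0 < eps ->
  exists k0, forall k, (k0 <= k)%nat -> (INR k + 1) ^ 2 * q ^ k < eps.
Proof.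
  intros [Hq0 Hq1] He.
  set (d := / q - 1).
  assert (Hd : 0 < d). { unfold d. assert (1 < / q). { rewrite <- Rinv_1. apply Rinv_lt_contravar; lra. } lra. }
  assert (Hqd : q * (1 + d) = 1). { unfold d. field. lra. }
  destruct (archimed (24 / (eps * d ^ 3))) as [Ha _].
  set (z := Z.to_nat (up (24 / (eps * d ^ 3)))).
  exists (z + 5)%nat. intros k Hk.
  assert (Hz : 24 / (eps * d ^ 3) < INR k).
  { apply Rlt_le_trans with (IZR (up (24 / (eps * d ^ 3)))); auto.
    assert (0 < 24 / (eps * d ^ 3)).
    { apply Rdiv_lt_0_compat. lra. apply Rmult_lt_0_compat; auto. apply pow_lt; auto. }
    assert (Hup : (0 <= up (24 / (eps * d ^ 3)))%Z). { apply le_IZR. lra. }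
    rewrite <- (Z2Nat.id (up _)) by auto. rewrite <- INR_IZR_INZ. apply le_INR. unfold z in Hk. lia. }
  assert (Hk5 : 5 <= INR k). { replace 5 with (INR 5) by (simpl; lra). apply le_INR. lia. }
  set (Q := q ^ k). set (P := (1 + d) ^ k).
  assert (HPQ : Q * P = 1). { unfold Q, P. rewrite <- Rpow_mult_distr, Hqd. apply pow1. }
  assert (HQ : 0 < Q) by (apply pow_lt; auto).
  assert (HB := bern3 d k (Rlt_le _ _ Hd)). fold P in HB.
  set (x := INR k) in *.
  assert (Hd2 : 0 <= d ^ 2) by (apply pow_le; lra).
  assert (Hd3 : 0 < d ^ 3) by (apply pow_lt; lra).
  assert (HB' : x * (x - 1) * (x - 2) * d ^ 3 <= 6 * P).
  { assert (0 <= x * d) by nra. assert (0 <= x * (x - 1) / 2 * d ^ 2) by (apply Rmult_le_pos; [|lra]; nra). lra. }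
  assert (Hc : x * (x - 1) * (x - 2) * d ^ 3 * Q <= 6).
  { replace 6 with (6 * P * Q) by (rewrite Rmult_assoc, (Rmult_comm P Q), HPQ; lra).
    apply Rmult_le_compat_r; lra. }
  assert (Hsq : (x + 1) ^ 2 <= 4 * ((x - 1) * (x - 2))) by nra.
  assert (Hmain : (x + 1) ^ 2 * Q * (x * d ^ 3) <= 24).
  { assert (0 <= x * d ^ 3 * Q) by (apply Rmult_le_pos; [|lra]; apply Rmult_le_pos; lra).
    apply Rle_trans with (4 * ((x - 1) * (x - 2)) * (x * d ^ 3 * Q)).
    - replace ((x + 1) ^ 2 * Q * (x * d ^ 3)) with ((x + 1) ^ 2 * (x * d ^ 3 * Q)) by ring.
      apply Rmult_le_compat_r; auto.
    - replace (4 * ((x - 1) * (x - 2)) * (x * d ^ 3 * Q)) with (4 * (x * (x - 1) * (x - 2) * d ^ 3 * Q)) by ring.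
      lra. }
  assert (Hxd : 0 < x * d ^ 3) by (apply Rmult_lt_0_compat; lra).
  assert (Hz' : 24 < eps * (x * d ^ 3)).
  { apply Rmult_lt_compat_l with (r := eps * d ^ 3) in Hz; [|apply Rmult_lt_0_compat; lra].
    replace (eps * d ^ 3 * (24 / (eps * d ^ 3))) with 24 in Hz by (field; lra). lra. }
  apply Rmult_lt_reg_r with (x * d ^ 3); auto. lra.
Qed.


Lemma class_bounds m r n K : (0 < m)%nat -> (r < m)%nat ->
  exists g b Bad,
    maj_class_count m r n = (g + b)%nat /\
    (m * g + Bad = length (catalan_words n))%nat /\
    (b <= Bad)%nat /\
    Bad = length (filter (nogood m K) (catalan_words n)).
Proof.
  intros Hm Hr.
  exists (gcount m K n r),
    (length (filter (fun w => andb (Nat.eqb (maj w mod m) r) (negb (negb (nogood m K w)))) (catalan_words n))),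
    (length (filter (nogood m K) (catalan_words n))).
  split; [|split; [|split]]; auto.
  - unfold maj_class_count. rewrite (filter_split _ (fun w => negb (nogood m K w))). reflexivity.
  - rewrite gall by auto. rewrite gsum by auto.
    assert (Hc := filter_len_compl (fun w => negb (nogood m K w)) (catalan_words n)).
    assert (Hn : length (filter (fun x => negb (negb (nogood m K x))) (catalan_words n)) =
      length (filter (nogood m K) (catalan_words n))).
    { apply filter_len_ext_in. intros; apply Bool.negb_involutive. }
    lia.
  - apply filter_len_le_in. intros x _ H. apply andb_prop in H. rewrite Bool.negb_involutive in H. tauto.
Qed.

Theorem theorem3 (m r : nat) (hm : (2 <= m)%nat) (hr : (r <= m - 1)%nat) :
  Un_cv (fun n : nat => INR (maj_class_count m r n) / INR (length (catalan_words n)))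
        (1 / INR m).
Proof.
  intros eps He.
  set (L := (m + 2)%nat).
  set (T := 2 ^ L).
  assert (HT : 2 <= T). { unfold T. rewrite <- (pow_1 2) at 1. apply Rle_pow. lra. unfold L; lia. }
  set (q := (T - 1) / T).
  assert (Hq : 0 < q < 1). { unfold q. split. apply Rdiv_lt_0_compat; lra.
    apply Rmult_lt_reg_r with T. lra. unfold Rdiv. rewrite Rmult_assoc, Rinv_l by lra. lra. }
  assert (HL : 0 < INR L) by (apply lt_0_INR; unfold L; lia).
  destruct (decay q (eps / (INR L ^ 2)) Hq) as [k0 Hk0].
  { apply Rdiv_lt_0_compat; auto. apply pow_lt; auto. }
  exists (L * k0)%nat. intros n Hn. unfold R_dist.
  set (K := (2 * n / L)%nat). set (rr := ((2 * n) mod L)%nat).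
  assert (HK : (k0 <= K)%nat). { unfold K. apply Nat.div_le_lower_bound. unfold L; lia. lia. }
  assert (Ediv : (2 * n = L * K + rr)%nat). { unfold K, rr. apply Nat.div_mod. unfold L; lia. }
  assert (Hrr : (rr < L)%nat). { unfold rr. apply Nat.mod_upper_bound. unfold L; lia. }
  destruct (class_bounds m r n K ltac:(lia) ltac:(lia)) as [g [b [Bad [E1 [E2 [E3 E4]]]]]].
  assert (HB := bad_bound m n ltac:(lia)). fold L K rr in HB. rewrite <- E4 in HB.
  assert (HC := cat_lower n).
  set (Cn := length (catalan_words n)) in *.
  assert (Hpow : INR (4 ^ n) = T ^ K * 2 ^ rr).
  { rewrite pow_INR. replace (INR 4) with (2 ^ 2) by (simpl; lra). rewrite <- pow_mult.
    unfold T. rewrite <- pow_mult, <- pow_add. f_equal. lia. }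
  assert (HBr : INR Bad <= q ^ K * INR (4 ^ n)).
  { rewrite Hpow. apply le_INR in HB. rewrite mult_INR, !pow_INR, minus_INR in HB.
    2:{ apply Nat.pow_le_mono_r with (a := 2%nat) (b := 0%nat) (c := L); lia. }
    rewrite pow_INR in HB. replace (INR 2) with 2 in HB by reflexivity. replace (INR 1) with 1 in HB by reflexivity. fold T in HB.
    replace (T - 1) with (q * T) in HB by (unfold q; field; lra).
    rewrite Rpow_mult_distr in HB. lra. }
  assert (HCr : INR (4 ^ n) <= (INR (2 * n) + 1) ^ 2 * INR Cn).
  { apply le_INR in HC. rewrite (mult_INR (S (2*n) * S (2*n))), (mult_INR (S (2*n))), S_INR in HC.
    replace ((INR (2*n)+1)^2) with ((INR(2*n)+1)*(INR(2*n)+1)) by ring. lra. }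
  assert (Hsz : INR (2 * n) + 1 <= INR L * (INR K + 1)).
  { rewrite <- S_INR, <- S_INR, <- mult_INR. apply le_INR. lia. }
  assert (Cpos : 0 < INR Cn).
  { assert (1 <= 4 ^ n)%nat by (apply Nat.pow_le_mono_r with (a:=4%nat) (b:=0%nat); lia).
    apply lt_0_INR. destruct Cn; [lia|lia]. }
  assert (Hm : 0 < INR m) by (apply lt_0_INR; lia).
  assert (Ec : INR (maj_class_count m r n) = INR g + INR b) by (rewrite E1, plus_INR; auto).
  assert (EC : INR m * INR g + INR Bad = INR Cn) by (rewrite <- mult_INR, <- plus_INR; f_equal; auto).
  assert (Eb : INR b <= INR Bad) by (apply le_INR; auto).
  assert (Eb0 : 0 <= INR b) by apply pos_INR.
  assert (Hqk : 0 <= q ^ K) by (apply pow_le; lra).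
  assert (Hmain : Rabs (INR (maj_class_count m r n) / INR Cn - 1 / INR m) <= INR Bad / INR Cn).
  { replace (INR (maj_class_count m r n) / INR Cn - 1 / INR m)
      with ((INR m * INR b - INR Bad) * / (INR m * INR Cn)).
    2:{ rewrite Ec. field_simplify; try lra. rewrite <- EC. field. lra. }
    rewrite Rabs_mult, (Rabs_right (/ _)) by (left; apply Rinv_0_lt_compat; nra).
    apply Rmult_le_reg_r with (INR m * INR Cn). nra.
    rewrite Rmult_assoc, Rinv_l by nra. rewrite Rmult_1_r.
    replace (INR Bad / INR Cn * (INR m * INR Cn)) with (INR m * INR Bad) by (field; lra).
    assert (Hm1 : 1 <= INR m) by (replace 1 with (INR 1) by reflexivity; apply le_INR; lia).
    assert (0 <= INR m * INR b) by nra. assert (INR m * INR b <= INR m * INR Bad) by nra.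
    assert (INR Bad <= INR m * INR Bad) by nra.
    apply Rabs_le. split; lra. }
  assert (Hbd : INR Bad / INR Cn <= (INR L * (INR K + 1)) ^ 2 * q ^ K).
  { apply Rmult_le_reg_r with (INR Cn); auto. unfold Rdiv. rewrite Rmult_assoc, Rinv_l by lra.
    assert (0 <= INR (2 * n) + 1) by (pose proof (pos_INR (2 * n)); lra).
    assert ((INR (2 * n) + 1) ^ 2 <= (INR L * (INR K + 1)) ^ 2) by (apply pow_incr; lra).
    assert (H1 : q ^ K * INR (4 ^ n) <= q ^ K * ((INR (2 * n) + 1) ^ 2 * INR Cn)) by (apply Rmult_le_compat_l; lra).
    assert (H2 : (INR (2 * n) + 1) ^ 2 * INR Cn <= (INR L * (INR K + 1)) ^ 2 * INR Cn) by (apply Rmult_le_compat_r; lra).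
    assert (H3 : q ^ K * ((INR (2 * n) + 1) ^ 2 * INR Cn) <= q ^ K * ((INR L * (INR K + 1)) ^ 2 * INR Cn)) by (apply Rmult_le_compat_l; lra).
    rewrite Rmult_1_r. lra. }
  specialize (Hk0 K HK).
  assert (Hfin : (INR L * (INR K + 1)) ^ 2 * q ^ K < eps).
  { rewrite Rpow_mult_distr.
    apply Rmult_lt_compat_l with (r := INR L ^ 2) in Hk0; [|apply pow_lt; auto].
    replace (INR L ^ 2 * (eps / INR L ^ 2)) with eps in Hk0 by (field; lra). lra. }
  lra.
Qed.
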